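(* If $\lambda$ is the partition associated with a gap sequence $\{w_1,\dots,w_g\}$, then $s_\lambda(t)$ does not depend on $t_i$ for every positive integer $i\notin\{w_1,\dots,w_g\}$.
   Context: For $t=(t_1,t_2,\dots)$ define $p_m(t)$ by $\exp(\sum_{m\ge1}t_mk^m)=\sum_{m\ge0}p_m(t)k^m$, $p_m=0$ for $m<0$; $s_\mu(t)=\det(p_{\mu_i-i+j}(t))_{1\le i,j\le l}$ for a partition $\mu=(\mu_1\ge\dots\ge\mu_l)$. A gap sequence of genus $g\ge1$ is a set $G=\{w_1<\dots<w_g\}\subset\mathbb Z_{\ge0}$ with $g$ elements whose complement in $\mathbb Z_{\ge0}$ contains $0$ and is closed under addition; its partition is $\lambda=(w_g,\dots,w_1)-(g-1,\dots,1,0)$. *)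

(* Defs.v *)
From HB Require Import structures.
From mathcomp Require Import all_boot all_order all_algebra.
Set Implicit Arguments. Unset Strict Implicit. Unset Printing Implicit Defensive.
Import Order.TTheory GRing.Theory Num.Theory.
Local Open Scope ring_scope.

(* Variables t = (t_1, t_2, ...) are modelled by a function t : nat -> R
   (the value t 0 is unused).  R is any numeric field (char 0, e.g. Q, R, C). *)

Definition tser (R : numFieldType) (N : nat) (t : nat -> R) : {poly R} :=
  \sum_(1 <= j < N.+1) t j *: 'X^j.

(* p_m(t) = coefficient of k^m in exp(sum_{m>=1} t_m k^m).  Only terms of
   degree <= m in k matter, so the series is truncated: exp is replaced by
   sum_{n<=m} X^n/n! and the inner sum by its terms up to degree m. *)
Definition pcoef (R : numFieldType) (m : nat) (t : nat -> R) : R :=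
  (\sum_(n < m.+1) ((n`!)%:R)^-1 *: (tser m t) ^+ n)`_m.

Definition pz (R : numFieldType) (z : int) (t : nat -> R) : R :=
  match z with Posz m => pcoef m t | Negz _ => 0 end.

(* s_mu(t) = det (p_{mu_i - i + j}(t))_{1<=i,j<=l}, mu given as a seq
   (mu_1, ..., mu_l); indices are 0-based here, mu_{i+1}-(i+1)+(j+1) = mu_{i+1}-i+j. *)
Definition schur (R : numFieldType) (mu : seq nat) (t : nat -> R) : R :=
  \det (\matrix_(i < size mu, j < size mu)
          pz ((nth 0%N mu i)%:Z - (i : nat)%:Z + (j : nat)%:Z) t).

Definition is_gap_sequence (G : seq nat) : Prop :=
  [/\ (0 < size G)%N, sorted ltn G, 0%N \notin G &
      forall a b : nat, a \notin G -> b \notin G -> (a + b)%N \notin G].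

(* lambda = (w_g, ..., w_1) - (g-1, ..., 1, 0):
   lambda_{k+1} = w_{g-k} - (g-1-k) for k = 0..g-1. *)
Definition gap_partition (G : seq nat) : seq nat :=
  mkseq (fun k => nth 0%N (rev G) k - ((size G).-1 - k))%N (size G).

(* Main.v *)
Require Import Defs.
From HB Require Import structures.
From mathcomp Require Import all_boot all_order all_algebra.
From mathcomp Require Import zify ring lra.
Import Order.TTheory GRing.Theory Num.Theory.
Local Open Scope ring_scope.

Section S.
Variable R : numFieldType.
Implicit Types p q : {poly R}.

Definition low0 (a : nat) p := forall j, (j < a)%N -> p`_j = 0.

Lemma lowM a b p q : low0 a p -> low0 b q -> low0 (a + b) (p * q).
Proof.
move=> hp hq j hj; rewrite coefM big1 // => k _.
case: (ltnP k a) => hk; first by rewrite hp // mul0r.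
rewrite hq ?mulr0 //; have := ltn_ord k; lia.
Qed.

Lemma lowX n p : low0 1 p -> low0 n (p ^+ n).
Proof.
move=> hp; elim: n => [|n IH]; first by move=> j.
by rewrite exprS -add1n; apply: lowM.
Qed.

Lemma lowZ a c p : low0 a p -> low0 a (c *: p).
Proof. by move=> hp j hj; rewrite coefZ hp ?mulr0. Qed.

Definition eqt (m : nat) p q := forall k, (k <= m)%N -> p`_k = q`_k.

Lemma eqtM m p p' q q' : eqt m p p' -> eqt m q q' -> eqt m (p * q) (p' * q').
Proof.
move=> h1 h2 k hk; rewrite !coefM; apply: eq_bigr => j _.
have := ltn_ord j => hj.
rewrite h1; last lia. rewrite h2 //; lia.
Qed.

Lemma eqtX m n p q : eqt m p q -> eqt m (p ^+ n) (q ^+ n).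
Proof.
move=> h; elim: n => [|n IH]; first by move=> k.
by rewrite !exprS; apply: eqtM.
Qed.

Lemma eqtZ m c p q : eqt m p q -> eqt m (c *: p) (c *: q).
Proof. by move=> h k hk; rewrite !coefZ h. Qed.

Lemma eqt_sum m (I : Type) (r : seq I) (F G : I -> {poly R}) :
  (forall i, eqt m (F i) (G i)) -> eqt m (\sum_(i <- r) F i) (\sum_(i <- r) G i).
Proof.
move=> h k hk; rewrite !coef_sum; apply: eq_bigr => i _; exact: h.
Qed.

Definition E (N : nat) p : {poly R} := \sum_(n < N.+1) ((n`!)%:R)^-1 *: p ^+ n.

Lemma E_trunc N m p : low0 1 p -> (m <= N)%N -> eqt m (E N p) (E m p).
Proof.
move=> hp hmN k hk; rewrite /E !coef_sum.
rewrite (@big_ord_widen _ _ _ m.+1 N.+1 (fun n => (((n`!)%:R)^-1 *: p ^+ n)`_k)) //.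
rewrite [RHS]big_mkcond /=; apply: eq_bigr => n _.
case: ifP => // hn; rewrite coefZ lowX ?mulr0 //; lia.
Qed.

Lemma coef_tser N (t : nat -> R) k :
  (tser N t)`_k = if (1 <= k <= N)%N then t k else 0.
Proof.
rewrite /tser; elim: N => [|N IH].
  by rewrite big_geq // coef0; case: k => [|[|k]].
rewrite big_nat_recr //= coefD IH coefZ coefXn.
case: (eqVneq k N.+1) => [->|hk].
  by rewrite mulr1 ltnn /= add0r leqnn.
rewrite mulr0 addr0; congr (if _ then _ else _).
apply/idP/idP; lia.
Qed.

Lemma low_tser N t : low0 1 (tser N t).
Proof. by move=> j; rewrite ltnS leqn0 => /eqP ->; rewrite coef_tser. Qed.

Lemma pcoefE m N t : (m <= N)%N -> pcoef m t = (E N (tser N t))`_m.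
Proof.
move=> hmN; rewrite /pcoef -/(E m (tser m t)).
rewrite (@E_trunc N m _ (low_tser N t) hmN m (leqnn m)).
apply: (@eqt_sum m _ _ _ _ _ m (leqnn m)) => n; apply: eqtZ; apply: eqtX => //.
move=> k hk; rewrite !coef_tser; case: k hk => //= k hk.
by rewrite hk; have -> : (k < N)%N by lia.
Qed.


Lemma tri (V : nmodType) (h : nat -> nat -> V) N :
  \sum_(0 <= n < N.+1) \sum_(0 <= a < n.+1) h (n - a)%N a =
  \sum_(0 <= b < N.+1) \sum_(0 <= a < (N.+1 - b)%N) h a b.
Proof.
elim: N => [|N IH].
  by rewrite unlock /= !addr0.
rewrite big_nat_recr //= IH.
rewrite [RHS]big_nat_recr //= subSnn big_nat1.
have -> : \sum_(0 <= i < N.+1) \sum_(0 <= a < (N.+2 - i)%N) h a i =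
   \sum_(0 <= b < N.+1) (\sum_(0 <= a < (N.+1 - b)%N) h a b + h (N.+1 - b)%N b).
  apply: eq_big_nat => b /andP[_ hb].
  rewrite (_ : (N.+2 - b = (N.+1 - b).+1)%N); last lia.
  by rewrite big_nat_recr.
rewrite big_split /= -addrA; congr (_ + _).
by rewrite big_nat_recr //= subnn.
Qed.

Definition w a b p q : {poly R} :=
  (((a`!)%:R)^-1 * ((b`!)%:R)^-1) *: (p ^+ a * q ^+ b).

Lemma EM N p q : E N p * E N q = \sum_(a < N.+1) \sum_(b < N.+1) w a b p q.
Proof.
rewrite /E mulr_suml; apply: eq_bigr => a _; rewrite mulr_sumr.
by apply: eq_bigr => b _; rewrite -scalerAl -scalerAr scalerA /w mulrC.
Qed.

Lemma ED N p q : E N (p + q) =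
  \sum_(0 <= n < N.+1) \sum_(0 <= a < n.+1) w (n - a)%N a p q.
Proof.
rewrite /E big_mkord; apply: eq_bigr => n _.
rewrite exprDn scaler_sumr big_mkord; apply: eq_bigr => a _.
have han : (a <= n)%N by have := ltn_ord a; lia.
rewrite /w -scaler_nat scalerA; congr (_ *: _).
have hf := bin_fact han.
have h1 : (n`!)%:R = ('C(n, a))%:R * (a`!)%:R * ((n - a)`!)%:R :> R.
  by rewrite -!natrM -mulnA hf.
have h2 : (a`!)%:R != 0 :> R by rewrite pnatr_eq0 -lt0n fact_gt0.
have h3 : ((n - a)`!)%:R != 0 :> R by rewrite pnatr_eq0 -lt0n fact_gt0.
rewrite h1; field.
have h4 : ('C(n, a))%:R != 0 :> R by rewrite pnatr_eq0 -lt0n bin_gt0.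
by rewrite h2 h3 h4.
Qed.

Lemma E_add N p q : low0 1 p -> low0 1 q ->
  eqt N (E N (p + q)) (E N p * E N q).
Proof.
move=> hp hq k hk.
rewrite ED EM coef_sum.
under eq_bigr do rewrite coef_sum.
rewrite (@tri _ (fun a b => (w a b p q)`_k)) coef_sum.
under [RHS]eq_bigr do rewrite coef_sum.
rewrite [RHS]exchange_big /= big_mkord.
apply: eq_bigr => b _.
have hb := ltn_ord b.
rewrite -(big_mkord xpredT (fun a => (w a b p q)`_k)).
rewrite [RHS](@big_cat_nat _ _ _ (N.+1 - b)%N 0 N.+1) ?leq0n ?leq_subr //=.
rewrite [X in _ = _ + X]big1_seq ?addr0 //.
move=> a /andP[_]; rewrite mem_index_iota => /andP[ha _].
rewrite /w coefZ.
rewrite (@lowM a b) ?mulr0 //; first exact: lowX.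
  exact: lowX.
lia.
Qed.

Lemma sum_range (f : nat -> R) n K : (n <= K)%N -> (forall j, (n <= j)%N -> f j = 0) ->
  \sum_(j < K) f j = \sum_(j < n) f j.
Proof.
move=> hnK hf; rewrite (big_ord_widen K f hnK) [RHS]big_mkcond /=.
apply: eq_bigr => j _; case: ifP => // /negbT; rewrite -leqNgt; exact: hf.
Qed.

Definition cc (d : R) (j : nat) : R := ((j`!)%:R)^-1 * d ^+ j.

Lemma tser_upd N i (t t' : nat -> R) : (0 < i <= N)%N ->
  (forall j, j != i -> t j = t' j) ->
  tser N t' = tser N t + (t' i - t i) *: 'X^i.
Proof.
move=> hi ht; apply/polyP => k; rewrite coefD coefZ coefXn !coef_tser.
case: (eqVneq k i) => [->|hk]; first by rewrite hi mulr1 addrC subrK.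
rewrite mulr0 addr0 ht //.
Qed.

Lemma E_mono N (d : R) i : E N (d *: 'X^i) = \sum_(j < N.+1) cc d j *: 'X^(i * j).
Proof.
rewrite /E; apply: eq_bigr => j _.
by rewrite exprZn scalerA -exprM.
Qed.

Lemma pcoef_shift (i : nat) (t t' : nat -> R) : (0 < i)%N ->
  (forall j, j != i -> t j = t' j) ->
  forall m K, (m < K)%N -> pcoef m t' =
   \sum_(j < K) (if (i * j <= m)%N then cc (t' i - t i) j * pcoef (m - i * j) t else 0).
Proof.
move=> hi ht m K hmK.
rewrite (@pcoefE m (m + i)); last lia.
rewrite (@tser_upd (m + i) i t t') //; last lia.
rewrite E_add ?leq_addr //; last 2 first.
- exact: low_tser.
- move=> j; rewrite ltnS leqn0 => /eqP ->; rewrite coefZ coefXn.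
  by rewrite (_ : (0 == i)%N = false) ?mulr0 //; apply/eqP; lia.
rewrite E_mono mulr_sumr coef_sum.
have hz : forall j, (m.+1 <= j)%N -> (if (i * j <= m)%N then cc (t' i - t i) j * pcoef (m - i * j) t else 0) = 0.
  move=> j hj; case: ifP => // h; exfalso; nia.
rewrite (@sum_range _ m.+1 K hmK hz).
rewrite (@sum_range (fun j => ((E (m + i) (tser (m + i) t) * (cc (t' i - t i) j *: 'X^(i * j)))`_m)) m.+1); last 2 first.
- lia.
- move=> j hj /=; rewrite -scalerAr coefZ coefMXn.
  have -> : (m < i * j)%N by nia.
  by rewrite mulr0.
apply: eq_bigr => j _ /=; rewrite -scalerAr coefZ coefMXn ltnNge.
case hb: (i * j <= m)%N => /=; last by rewrite mulr0.
by rewrite (@pcoefE (m - i * j) (m + i)) //; lia.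
Qed.

Lemma pz_neg (z : int) (t : nat -> R) : (z < 0)%R -> pz z t = 0.
Proof. by case: z. Qed.

Lemma pz_shift (i : nat) (t t' : nat -> R) : (0 < i)%N ->
  (forall j, j != i -> t j = t' j) ->
  forall n s0 K, (n < K)%N -> pz (n%:Z - s0%:Z) t' =
   \sum_(j < K) (if (i * j <= n)%N then cc (t' i - t i) j * pz ((n - i * j)%:Z - s0%:Z) t else 0).
Proof.
move=> hi ht n s0 K hnK.
case: (leqP s0 n) => hs.
  rewrite subzn //= (@pcoef_shift i t t' hi ht (n - s0)%N K); last lia.
  apply: eq_bigr => j _.
  case: (leqP (i * j) (n - s0)) => h1.
    have -> : (i * j <= n)%N by lia.
    rewrite subzn /=; last lia.
    by congr (_ * pcoef _ _); lia.
  case: ifP => // h2; rewrite pz_neg ?mulr0 //.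
  rewrite subr_lt0 ltz_nat; lia.
rewrite pz_neg; last by rewrite subr_lt0 ltz_nat.
symmetry; apply: big1 => j _; case: ifP => // h.
rewrite pz_neg ?mulr0 // subr_lt0 ltz_nat; lia.
Qed.

Lemma sum_onehot (s : seq nat) (c : nat) (v : R) : uniq s -> c \in s ->
  \sum_(x <- s) (if x == c then v else 0) = v.
Proof.
move=> us cs; rewrite -big_mkcond /= big_const_seq.
have -> : count (fun x => x == c) s = 1%N.
  by have := count_uniq_mem c us; rewrite cs.
by rewrite /= addr0.
Qed.

Lemma seq_lemma (i : nat) (d : R) (s : seq nat) (y K : nat) (F : nat -> R) :
  (0 < i)%N -> uniq s -> (y < K)%N ->
  (forall j, (i * j <= y)%N -> (y - i * j)%N \in s) ->
  \sum_(x <- s) ((if (x <= y)%N && (i %| y - x)%N then cc d ((y - x) %/ i) else 0) * F x)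
  = \sum_(j < K) (if (i * j <= y)%N then cc d j * F (y - i * j)%N else 0).
Proof.
move=> hi us hyK hcl.
have -> : \sum_(j < K) (if (i * j <= y)%N then cc d j * F (y - i * j)%N else 0) =
   \sum_(j < K) \sum_(x <- s) (if (x == y - i * j)%N && (i * j <= y)%N then cc d j * F x else 0).
  apply: eq_bigr => j _; case: ifP => h.
    rewrite -(@sum_onehot s (y - i * j)%N (cc d j * F (y - i * j)%N) us (hcl j h)).
    by apply: eq_bigr => x _; rewrite andbT; case: eqP => // ->.
  by rewrite big1 // => x _; rewrite andbF.
rewrite exchange_big /=; apply: eq_bigr => x _.
case: ifP => hc.
  case/andP: hc => hxy hdiv.
  have hj0 : ((y - x) %/ i < K)%N.
    have := leq_div (y - x) i; lia.
  rewrite (bigD1 (Ordinal hj0)) //= big1 ?addr0.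
    have hk : (i * ((y - x) %/ i) = y - x)%N by rewrite mulnC divnK.
    rewrite hk; have -> : (x == y - (y - x))%N by apply/eqP; lia.
    by have -> : (y - x <= y)%N by lia.
  move=> j hj; case: ifP => // /andP[/eqP hx hjy]; exfalso.
  move/eqP: hj; apply; apply: val_inj => /=.
  have -> : (y - x = i * j)%N by lia.
  by rewrite mulKn.
rewrite mul0r big1 // => j _; case: ifP => // /andP[/eqP hx hjy].
move: hc; have -> : (x <= y)%N by lia.
have -> : (y - x = i * j)%N by lia.
by rewrite dvdn_mulr.
Qed.

Lemma sum_nth (s : seq nat) n (h : nat -> R) : n = size s ->
  \sum_(a < n) h (nth 0%N s a) = \sum_(x <- s) h x.
Proof. by move=> ->; rewrite (big_nth 0%N) big_mkord. Qed.

Lemma core (i : nat) (t t' : nat -> R) (mu s : seq nat) : (0 < i)%N ->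
  (forall j, j != i -> t j = t' j) ->
  size s = size mu -> sorted (fun x y => y < x)%N s ->
  (forall a, (a < size mu)%N -> (nth 0 mu a + ((size mu).-1 - a))%N = nth 0 s a) ->
  (forall x j, x \in s -> (i * j <= x)%N -> (x - i * j)%N \in s) ->
  schur mu t = schur mu t'.
Proof.
move=> hi ht hsz hsort hnth hcl.
have us : uniq s.
  apply: (sorted_uniq (leT := fun x y => y < x)%N) => //.
    by move=> a b c h1 h2; apply: ltn_trans h2 h1.
  by move=> a; rewrite /= ltnn.
set g := size mu.
pose M (u : nat -> R) := \matrix_(a < g, b < g) pz ((nth 0%N s a)%:Z - (g.-1 - b)%:Z) u.
have hM : forall u, schur mu u = \det (M u).
  move=> u; rewrite /schur; congr (\det _); apply/matrixP => a b; rewrite !mxE.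
  congr (pz _ _); have ha := ltn_ord a; have hb := ltn_ord b.
  rewrite -(hnth a ha).
  rewrite /g -!subn1 PoszD.
  have e1 : ((size mu - 1 - a)%N : int) = (size mu - 1)%N%:Z - a%:Z by rewrite subzn //; lia.
  have e2 : ((size mu - 1 - b)%N : int) = (size mu - 1)%N%:Z - b%:Z by rewrite subzn //; lia.
  rewrite e1 e2; ring.
pose U := \matrix_(a < g, a' < g)
  (if (nth 0%N s a' <= nth 0%N s a)%N && (i %| nth 0%N s a - nth 0%N s a')%N
   then cc (t' i - t i) ((nth 0%N s a - nth 0%N s a') %/ i) else 0).
have hU : M t' = U *m M t.
  apply/matrixP => a b; rewrite !mxE.
  set y := nth 0%N s a.
  rewrite (@pz_shift i t t' hi ht y (g.-1 - b)%N y.+1) //.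
  rewrite /U /M /=. under [RHS]eq_bigr do rewrite !mxE.
  rewrite (@sum_nth s g (fun x => (if (x <= y)%N && (i %| y - x)%N then cc (t' i - t i) ((y - x) %/ i) else 0) *
      pz (x%:Z - (g.-1 - b)%:Z) t)) //.
  rewrite (@seq_lemma i (t' i - t i) s y y.+1 (fun x => pz (x%:Z - (g.-1 - b)%:Z) t)) //.
  move=> j hj; apply: hcl => //; rewrite /y mem_nth // hsz; exact: ltn_ord.
have hdetU : \det U = 1.
  rewrite -det_tr det_trig; last first.
    apply/is_trig_mxP => a b hab; rewrite !mxE.
    have htr : transitive (fun x y : nat => (y < x)%N).
      by move=> a1 b1 c1 h1 h2; apply: ltn_trans h2 h1.
    have hlt : (nth 0%N s b < nth 0%N s a)%N.
      have := @sorted_ltn_nth _ (fun x y => y < x)%N htr 0%N s hsort a b.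
      rewrite !inE hsz; apply => //; exact: ltn_ord.
    move: hlt; rewrite ltnNge => /negbTE ->.
    done.
  apply: big1 => a _; rewrite !mxE leqnn subnn dvdn0 div0n /cc /=.
  by rewrite invr1 mulr1.
by rewrite !hM hU det_mulmx hdetU mul1r.
Qed.

End S.

Lemma nth_ge (G : seq nat) : sorted ltn G -> forall k, (k < size G)%N -> (k <= nth 0%N G k)%N.
Proof.
move=> hs; elim=> [|k IH] hk //.
have h1 := IH (ltnW hk).
have := @sorted_ltn_nth _ ltn ltn_trans 0%N G hs k k.+1.
rewrite !inE => /(_ (ltnW hk) hk (ltnSn k)); lia.
Qed.

Lemma gap_closed (G : seq nat) i : is_gap_sequence G -> i \notin G ->
  forall x j, x \notin G -> (x + i * j)%N \notin G.
Proof.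
case=> _ _ _ hadd hi x; elim=> [|j IH] hx; first by rewrite muln0 addn0.
by rewrite mulnS addnCA addnC; apply: hadd => //; apply: IH.
Qed.


Theorem proposition2p2 (R : numFieldType) (G : seq nat) :
  is_gap_sequence G ->
  forall i : nat, (0 < i)%N -> i \notin G ->
  forall t t' : nat -> R, (forall j : nat, j != i -> t j = t' j) ->
  schur (gap_partition G) t = schur (gap_partition G) t'.
Proof.
move=> hG i hi hiG t t' ht.
have hsort : sorted ltn G by case: hG.
have hsz : size (gap_partition G) = size G by rewrite size_mkseq.
apply: (@core R i t t' (gap_partition G) (rev G) hi ht).
- by rewrite size_rev hsz.
- by rewrite rev_sorted.
- move=> a; rewrite hsz => ha; rewrite nth_mkseq //.
  have := @nth_ge G hsort (size G - a.+1)%N; rewrite nth_rev //.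
  move=> h; have := h ltac:(lia); lia.
- move=> x j; rewrite !mem_rev => hx hjx.
  apply/negPn/negP => hn.
  have := @gap_closed G i hG hiG (x - i * j)%N j hn.
  by rewrite subnK // hx.
Qed.
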